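(* For $\mathfrak g=A_2$ and every $n\in\mathbb N$, $S_{n\lambda_1,2}=\mathcal L_{n\lambda_1,2}\cap P_{2n\lambda_1}$.
   Context: $A_2=\mathfrak{sl}_3$ with simple roots $\alpha_1,\alpha_2$, fundamental weights $\lambda_1,\lambda_2$, weight lattice $\Lambda$, root lattice $\Lambda_r$, dominant weights $\Lambda^+$, Weyl group $W$, $\rho=\lambda_1+\lambda_2$. $\Pi_\lambda$ is the set of weights of $V_\lambda$; $S_{\lambda,a}=[\bigcup_{\sigma\in W}(\sigma(\rho)-\rho+a\Pi_\lambda)]\cap\Lambda^+$; $\mathcal L_{\lambda,a}=\bigcup_{\sigma\in W}(a\lambda+\sigma(\rho)-\rho+a\Lambda_r)$; $P_\lambda$ is the convex hull of $\Pi_\lambda\cap\Lambda^+$ (so $\mathcal L_{\lambda,a}\cap P_{a\lambda}$ is a set of weights). *)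

(* Defs.v *)
From HB Require Import structures.
From mathcomp Require Import all_boot all_order all_algebra.
Set Implicit Arguments. Unset Strict Implicit. Unset Printing Implicit Defensive.
Import Order.TTheory GRing.Theory Num.Theory.
Local Open Scope ring_scope.

(* A weight x is written in the basis of fundamental weights:
   x = x.1 * lambda_1 + x.2 * lambda_2, so the weight lattice is int * int. *)
Definition weight := (int * int)%type.

Definition wadd (x y : weight) : weight := (x.1 + y.1, x.2 + y.2).
Definition wsub (x y : weight) : weight := (x.1 - y.1, x.2 - y.2).
Definition wscale (a : int) (x : weight) : weight := (a * x.1, a * x.2).

Definition lambda1 : weight := (1, 0).
Definition lambda2 : weight := (0, 1).
Definition rho : weight := wadd lambda1 lambda2.
(* simple roots in the fundamental-weight basis (rows of the Cartan matrix) *)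
Definition alpha1 : weight := (2, -1).
Definition alpha2 : weight := (-1, 2).

(* simple reflections s_i(mu) = mu - <mu, alpha_i^vee> alpha_i *)
Definition s1 (mu : weight) : weight := wsub mu (wscale mu.1 alpha1).
Definition s2 (mu : weight) : weight := wsub mu (wscale mu.2 alpha2).

(* Weyl group W = group generated by s1, s2: an element is given by a word
   (true = s1, false = s2); weyl_act w is the corresponding element of W. *)
Definition weyl_act (w : seq bool) (mu : weight) : weight :=
  foldr (fun b m => if b then s1 m else s2 m) mu w.

Definition in_root_lattice (nu : weight) : Prop :=
  exists c1 c2 : int, nu = wadd (wscale c1 alpha1) (wscale c2 alpha2).

Definition in_pos_root_cone (nu : weight) : Prop :=
  exists c1 c2 : nat, nu = wadd (wscale c1%:Z alpha1) (wscale c2%:Z alpha2).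

Definition dominant (mu : weight) : Prop := 0 <= mu.1 /\ 0 <= mu.2.

(* Pi_lambda, the set of weights of V_lambda (lambda dominant):
   mu is a weight iff sigma(mu) <= lambda in dominance order for all sigma in W
   (Humphreys, 21.3). *)
Definition weights_of (lam mu : weight) : Prop :=
  forall w : seq bool, in_pos_root_cone (wsub lam (weyl_act w mu)).

Definition S_set (lam : weight) (a : int) (nu : weight) : Prop :=
  dominant nu /\
  exists (w : seq bool) (mu : weight),
    weights_of lam mu /\ nu = wadd (wsub (weyl_act w rho) rho) (wscale a mu).

Definition L_set (lam : weight) (a : int) (nu : weight) : Prop :=
  exists (w : seq bool) (r : weight),
    in_root_lattice r /\
    nu = wadd (wadd (wscale a lam) (wsub (weyl_act w rho) rho)) (wscale a r).

(* convex hull (in Lambda (x) R, coordinates in R) of a set A of weights *)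
Definition in_hull (R : realFieldType) (A : weight -> Prop) (x : weight) : Prop :=
  exists s : seq (weight * R),
    (forall p, p \in s -> A p.1 /\ 0 <= p.2) /\
    \sum_(p <- s) p.2 = 1 /\
    \sum_(p <- s) p.2 * (p.1.1)%:~R = (x.1)%:~R /\
    \sum_(p <- s) p.2 * (p.1.2)%:~R = (x.2)%:~R.

Definition in_P (R : realFieldType) (lam : weight) (x : weight) : Prop :=
  in_hull R (fun mu => weights_of lam mu /\ dominant mu) x.

(* Main.v *)
Require Import Defs.
From HB Require Import structures.
From mathcomp Require Import all_boot all_order all_algebra.
From mathcomp Require Import zify ring lra.
Import Order.TTheory GRing.Theory Num.Theory.
Local Open Scope ring_scope.

Definition orbP (mu v : weight) : Prop :=
  (v.1 = mu.1 /\ v.2 = mu.2) \/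
  (v.1 = - mu.1 /\ v.2 = mu.1 + mu.2) \/
  (v.1 = mu.1 + mu.2 /\ v.2 = - mu.2) \/
  (v.1 = mu.2 /\ v.2 = - mu.1 - mu.2) \/
  (v.1 = - mu.1 - mu.2 /\ v.2 = mu.1) \/
  (v.1 = - mu.2 /\ v.2 = - mu.1).

Lemma orbit (w : seq bool) (mu : weight) : orbP mu (weyl_act w mu).
Proof.
elim: w => [|b w IH] /=; first by rewrite /orbP; lia.
move: IH; case: (weyl_act w mu) => x y; rewrite /orbP /=.
case: b; rewrite /s1 /s2 /wsub /wscale /alpha1 /alpha2 /=; lia.
Qed.

Lemma cone_of (X Y c1 c2 : int) : 0 <= c1 -> 0 <= c2 ->
  X = 2 * c1 - c2 -> Y = - c1 + 2 * c2 -> in_pos_root_cone (X, Y).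
Proof.
move=> h1 h2 hX hY; exists `|c1|%N, `|c2|%N.
rewrite !gez0_abs // /wadd /wscale /alpha1 /alpha2 /= hX hY; congr pair; lia.
Qed.

Lemma cone_inv (X Y : int) : in_pos_root_cone (X, Y) ->
  exists c1 c2 : int, 0 <= c1 /\ 0 <= c2 /\ X = 2 * c1 - c2 /\ Y = - c1 + 2 * c2.
Proof.
move=> [c1 [c2]]; rewrite /wadd /wscale /alpha1 /alpha2 /= => [[-> ->]].
exists c1%:Z, c2%:Z; lia.
Qed.

Lemma Pi_of (p3 N a b : int) : 0 <= p3 -> 0 <= p3 + b -> 0 <= p3 + a + b ->
  N = 3 * p3 + a + 2 * b -> weights_of (N, 0) (a, b).
Proof.
move=> h1 h2 h3 hN w; move: (orbit w (a, b)); case: (weyl_act w (a, b)) => x y.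
rewrite /orbP /wsub /=.
case=> [[-> ->]|[[-> ->]|[[-> ->]|[[-> ->]|[[-> ->]|[-> ->]]]]]].
- by apply: (@cone_of _ _ ((p3 + b) + p3) (p3)); lia.
- by apply: (@cone_of _ _ ((p3 + a + b) + p3) (p3)); lia.
- by apply: (@cone_of _ _ (p3 + (p3 + b)) (p3 + b)); lia.
- by apply: (@cone_of _ _ (p3 + (p3 + a + b)) (p3 + a + b)); lia.
- by apply: (@cone_of _ _ ((p3 + a + b) + (p3 + b)) (p3 + b)); lia.
- by apply: (@cone_of _ _ ((p3 + b) + (p3 + a + b)) (p3 + a + b)); lia.
Qed.

Lemma Pi_inv (N a b : int) : weights_of (N, 0) (a, b) ->
  exists p3 : int, 0 <= p3 /\ 0 <= p3 + b /\ 0 <= p3 + a + b /\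
    N = 3 * p3 + a + 2 * b.
Proof.
move=> H.
have := H [::]; have := H [:: false]; have := H [:: false; true].
rewrite /= /s1 /s2 /wsub /wscale /alpha1 /alpha2 /=.
move=> /cone_inv [d1 [d2 Hd]] /cone_inv [e1 [e2 He]] /cone_inv [f1 [f2 Hf]].
exists f2; lia.
Qed.
Arguments Pi_inv {N a b}.

Lemma hull_lin (R : realFieldType) (A : weight -> Prop) (al be ga X Y : int) :
  in_hull R A (X, Y) -> (forall p, A p -> 0 <= al * p.1 + be * p.2 + ga) ->
  0 <= al * X + be * Y + ga.
Proof.
move=> [s [Hs [H1 [Hx Hy]]]] HA.
have E : ((al * X + be * Y + ga)%:~R : R) =
   \sum_(p <- s) p.2 * (al * p.1.1 + be * p.1.2 + ga)%:~R.
  have -> : \sum_(p <- s) p.2 * (al * p.1.1 + be * p.1.2 + ga)%:~R =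
     \sum_(p <- s) (al%:~R * (p.2 * p.1.1%:~R) + be%:~R * (p.2 * p.1.2%:~R)
        + ga%:~R * p.2) :> R.
    by apply: eq_bigr => p _; rewrite !intrD !intrM; ring.
  rewrite !big_split /= -!mulr_sumr Hx Hy H1 mulr1 !intrD !intrM /=.
  by [].
rewrite -(ler0z R) E big_seq; apply: sumr_ge0 => p /Hs [/HA hA hp].
by apply: mulr_ge0 => //; rewrite ler0z.
Qed.

Ltac unf := rewrite /= /s1 /s2 /wadd /wsub /wscale /rho /lambda1 /lambda2 /alpha1 /alpha2 /=.

Ltac cand2 w2 mu p3 := exists w2, mu; split;
  [apply: (@Pi_of p3); lia | unf; congr pair; lia].

Ltac two N c2 r1 r2 w E w2 d1 d2 k :=
  let go2 := cand2 w2 (N + r1 + d1, r2 + d2) (- c2 + k) in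
  case: (lerP 0 (- c2)) => ?;
  [ case: (lerP 0 (- c2 + r2)) => ?;
    [ case: (lerP 0 (- c2 + (N + r1) + r2)) => ?;
      [ exists w, (N + r1, r2); split;
          [ apply: (@Pi_of (- c2)); lia | rewrite E; unf; congr pair; lia ]
      | go2 ]
    | go2 ]
  | go2 ].

Theorem mainTheorem12 (R : realFieldType) (n : nat) (nu : weight) :
  S_set (wscale n%:Z lambda1) 2 nu <->
  (L_set (wscale n%:Z lambda1) 2 nu /\ in_P R (wscale 2 (wscale n%:Z lambda1)) nu).
Proof.
rewrite (_ : wscale n%:Z lambda1 = (n%:Z, 0)); last by rewrite /wscale /= mulr1 mulr0.
rewrite (_ : wscale 2 (n%:Z, 0) = (2 * n%:Z, 0)); last by rewrite /wscale /= mulr0.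
set N := n%:Z.
case: nu => X Y; split.
- case=> [[dX dY] [w [[a b] [Hmu Enu]]]].
  have [p3 Hp] := Pi_inv Hmu.
  rewrite /= in dX dY.
  move: Enu (orbit w rho); case E: (weyl_act w rho) => [x y].
  rewrite /wadd /wsub /wscale /rho /lambda1 /lambda2 /orbP /= => [[EX EY]] Ho.
  split.
  + exists w, (a - N, b); split.
      exists (-(p3 + b) - p3), (- p3); unf; congr pair; lia.
    rewrite E; unf; congr pair; lia.
  + exists [:: ((X, Y), 1)]; split.
      move=> p; rewrite inE => /eqP -> /=; split; last exact: ler01.
      split; last by split.
      case: Ho => [[? ?]|[[? ?]|[[? ?]|[[? ?]|[[? ?]|[? ?]]]]]];
        first [ apply: (@Pi_of (2 * p3)); lia
              | apply: (@Pi_of (2 * p3 + 1)); lia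
              | apply: (@Pi_of (2 * p3 + 2)); lia ].
    by rewrite !big_cons !big_nil /= !addr0 !mul1r.
- case=> [[w [[r1 r2] [[c1 [c2 Er]] Enu]]] HP].
  move: Er; unf => [[Er1 Er2]].
  have hX : 0 <= 1 * X + 0 * Y + 0.
    by apply: (@hull_lin R _ 1 0 0 X Y HP); move=> [u v] [_ [du dv]]; rewrite /= in du dv *; lia.
  have hY : 0 <= 0 * X + 1 * Y + 0.
    by apply: (@hull_lin R _ 0 1 0 X Y HP); move=> [u v] [_ [du dv]]; rewrite /= in du dv *; lia.
  have hZ : 0 <= (-1) * X + (-2) * Y + 2 * N.
    apply: (@hull_lin R _ (-1) (-2) (2 * N) X Y HP).
    by move=> [u v] [/Pi_inv [q Hq] _] /=; lia.
  move: Enu (orbit w rho); case E: (weyl_act w rho) => [x y].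
  unf => [[EX EY]]; rewrite /orbP /= => Ho.
  split; first by rewrite /dominant /=; lia.
  case: Ho => [[? ?]|[[? ?]|[[? ?]|[[? ?]|[[? ?]|[? ?]]]]]].
  - two N c2 r1 r2 w E [:: true; false; true] (1 : int) (1 : int) ((-1) : int).
  - two N c2 r1 r2 w E [:: false; true] ((-1) : int) (2 : int) ((-1) : int).
  - two N c2 r1 r2 w E [:: true; false] (2 : int) ((-1) : int) (0 : int).
  - two N c2 r1 r2 w E [:: true] (1 : int) ((-2) : int) (1 : int).
  - two N c2 r1 r2 w E [:: false] ((-2) : int) (1 : int) (0 : int).
  - two N c2 r1 r2 w E ([::] : seq bool) ((-1) : int) ((-1) : int) (1 : int).
Qed.
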